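(* Let $\mathcal{G}$ be a Garside groupoid and $x$ an object of $\mathcal{G}$. Let $C_1,C_2,C_3$ be pairwise intersecting cells in $\mathcal{G}_{x\to}$. Then there is a cell $C\subseteq\mathcal{G}_{x\to}$ containing $(C_1\cap C_2)\cup(C_2\cap C_3)\cup(C_3\cap C_1)$.
   Context: Arrows compose like paths. A Garside category is a small category $\mathcal{C}$ with an automorphism $\phi$ and a natural transformation $\Delta$ from the identity functor to $\phi$ (components $\Delta_y\colon y\to\phi(y)$) such that $\mathcal{C}$ is cancellative and homogeneous (admits an additive length function vanishing exactly on identities), every atom (non-identity morphism not a product of two non-identity ones) is simple ($f\colon y\to z$ is simple if $ff^*=\Delta_y$ for some $f^*\colon z\to\phi(y)$), and for each object the morphisms with that source (resp. target) form a lattice under $\preccurlyeq$ (resp. $\succcurlyeq$). The Garside groupoid $\mathcal{G}$ is the enveloping groupoid of $\mathcal{C}$; $\phi,\Delta$ extend to $\mathcal{G}$. For morphisms $f,g$ of $\mathcal{G}$, $f\preccurlyeq g$ means $g=fz$ with $z$ a morphism of $\mathcal{C}$. $\mathcal{G}_{x\to}$ is the set of morphisms of $\mathcal{G}$ with source $x$; it is a lattice under $\preccurlyeq$. A cell in $\mathcal{G}_{x\to}$ is an interval $[f,f\Delta_{t(f)}]=\{g: f\preccurlyeq g\preccurlyeq f\Delta_{t(f)}\}$, where $t(f)$ is the target of $f$. *)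

(* Defs.v *)
(* Plain Rocq (no library needed). Garside categories / groupoids.
   Conventions: arrows compose like paths, [comp f g] = "f then g"
   (defined when tgt f = src g; junk otherwise). *)

Record Groupoid : Type := {
  Obj : Type;
  Mor : Type;
  src : Mor -> Obj;
  tgt : Mor -> Obj;
  idm : Obj -> Mor;
  comp : Mor -> Mor -> Mor;
  inv : Mor -> Mor;
  src_idm : forall y, src (idm y) = y;
  tgt_idm : forall y, tgt (idm y) = y;
  src_comp : forall f g, tgt f = src g -> src (comp f g) = src f;
  tgt_comp : forall f g, tgt f = src g -> tgt (comp f g) = tgt g;
  comp_idl : forall f, comp (idm (src f)) f = f;
  comp_idr : forall f, comp f (idm (tgt f)) = f;
  compA : forall f g h, tgt f = src g -> tgt g = src h ->
            comp f (comp g h) = comp (comp f g) h;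
  src_inv : forall f, src (inv f) = tgt f;
  tgt_inv : forall f, tgt (inv f) = src f;
  comp_inv_r : forall f, comp f (inv f) = idm (src f);
  comp_inv_l : forall f, comp (inv f) f = idm (tgt f)
}.

Arguments src {_} f.
Arguments tgt {_} f.
Arguments idm {_} y.
Arguments comp {_} f g.
Arguments inv {_} f.

Definition is_functor (G H : Groupoid) (Fo : Obj G -> Obj H) (Fm : Mor G -> Mor H)
  : Prop :=
  (forall f, src (Fm f) = Fo (src f)) /\
  (forall f, tgt (Fm f) = Fo (tgt f)) /\
  (forall y, Fm (idm y) = idm (Fo y)) /\
  (forall f g, tgt f = src g -> Fm (comp f g) = comp (Fm f) (Fm g)).

Definition is_functor_on (G H : Groupoid) (pos : Mor G -> Prop)
  (Fo : Obj G -> Obj H) (Fm : Mor G -> Mor H) : Prop :=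
  (forall f, pos f -> src (Fm f) = Fo (src f)) /\
  (forall f, pos f -> tgt (Fm f) = Fo (tgt f)) /\
  (forall y, Fm (idm y) = idm (Fo y)) /\
  (forall f g, pos f -> pos g -> tgt f = src g ->
      Fm (comp f g) = comp (Fm f) (Fm g)).

Definition enveloping (G : Groupoid) (pos : Mor G -> Prop) : Prop :=
  forall (H : Groupoid) (Fo : Obj G -> Obj H) (Fm : Mor G -> Mor H),
    is_functor_on G H pos Fo Fm ->
    (exists Gm : Mor G -> Mor H,
        is_functor G H Fo Gm /\ forall f, pos f -> Gm f = Fm f) /\
    (forall Gm1 Gm2 : Mor G -> Mor H,
        is_functor G H Fo Gm1 -> is_functor G H Fo Gm2 ->
        (forall f, pos f -> Gm1 f = Fm f) ->
        (forall f, pos f -> Gm2 f = Fm f) ->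
        forall f, Gm1 f = Gm2 f).

Definition bij {A B : Type} (h : A -> B) : Prop :=
  exists k : B -> A, (forall a, k (h a) = a) /\ (forall b, h (k b) = b).

Section Garside.
Variable G : Groupoid.
Variable pos : Mor G -> Prop.   (* the morphisms of the Garside category C *)

Definition ldiv (f g : Mor G) : Prop :=
  exists z, pos z /\ tgt f = src z /\ g = comp f z.

Definition rdiv_ge (f g : Mor G) : Prop :=
  exists z, pos z /\ tgt z = src g /\ f = comp z g.

Definition atom (f : Mor G) : Prop :=
  pos f /\ f <> idm (src f) /\
  ~ (exists g h, pos g /\ pos h /\ g <> idm (src g) /\ h <> idm (src h) /\
        tgt g = src h /\ f = comp g h).

Definition simple (phio : Obj G -> Obj G) (Delta : Obj G -> Mor G)
  (f : Mor G) : Prop :=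
  pos f /\ exists fs, pos fs /\ src fs = tgt f /\ tgt fs = phio (src f) /\
    comp f fs = Delta (src f).

End Garside.

Definition is_lattice {T : Type} (A : T -> Prop) (le : T -> T -> Prop) : Prop :=
  (forall a, A a -> le a a) /\
  (forall a b c, A a -> A b -> A c -> le a b -> le b c -> le a c) /\
  (forall a b, A a -> A b -> le a b -> le b a -> a = b) /\
  (forall a b, A a -> A b ->
     (exists m, A m /\ le m a /\ le m b /\
        forall c, A c -> le c a -> le c b -> le c m) /\
     (exists j, A j /\ le a j /\ le b j /\
        forall c, A c -> le a c -> le b c -> le j c)).

Definition IsGarsideGroupoid (G : Groupoid) (pos : Mor G -> Prop)
  (phio : Obj G -> Obj G) (phim : Mor G -> Mor G) (Delta : Obj G -> Mor G)
  : Prop :=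
  (forall y, pos (idm y)) /\
  (forall f g, pos f -> pos g -> tgt f = src g -> pos (comp f g)) /\
  enveloping G pos /\
  is_functor G G phio phim /\ bij phio /\ bij phim /\
  (forall f, pos f <-> pos (phim f)) /\
  (forall y, src (Delta y) = y /\ tgt (Delta y) = phio y /\ pos (Delta y)) /\
  (forall f, pos f -> comp f (Delta (tgt f)) = comp (Delta (src f)) (phim f)) /\
  (forall f g h, pos f -> pos g -> pos h -> tgt f = src g -> tgt f = src h ->
      comp f g = comp f h -> g = h) /\
  (forall f g h, pos f -> pos g -> pos h -> tgt g = src f -> tgt h = src f ->
      comp g f = comp h f -> g = h) /\
  (exists lam : Mor G -> nat,
      (forall f g, pos f -> pos g -> tgt f = src g ->
         lam (comp f g) = lam f + lam g) /\
      (forall f, pos f -> (lam f = 0 <-> f = idm (src f)))) /\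
  (forall f, atom G pos f -> simple G pos phio Delta f) /\
  (forall y, is_lattice (fun f => pos f /\ src f = y) (ldiv G pos)) /\
  (forall y, is_lattice (fun f => pos f /\ tgt f = y) (rdiv_ge G pos)).

Definition cell (G : Groupoid) (pos : Mor G -> Prop) (Delta : Obj G -> Mor G)
  (f : Mor G) : Mor G -> Prop :=
  fun g => ldiv G pos f g /\ ldiv G pos g (comp f (Delta (tgt f))).

(* Main.v *)
Require Import Defs.

Ltac st0 := repeat progress (try rewrite !src_inv; try rewrite !tgt_inv;
  try rewrite !src_idm; try rewrite !tgt_idm;
  repeat match goal with H : forall _, src _ = _ |- _ => progress rewrite !H end;
  repeat match goal with H : forall _, tgt _ = _ |- _ => progress rewrite !H end;
  try (rewrite src_comp by (st0; congruence));
  try (rewrite tgt_comp by (st0; congruence)));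
  try congruence.

Ltac sth := repeat match goal with
  | H : context[tgt (comp _ _)] |- _ => rewrite tgt_comp in H by st0
  | H : context[src (comp _ _)] |- _ => rewrite src_comp in H by st0
  | H : context[tgt (inv _)] |- _ => rewrite tgt_inv in H
  | H : context[src (inv _)] |- _ => rewrite src_inv in H
  end.

Ltac st := sth; st0.

Lemma inv_cancel_l (G : Groupoid) (a b : Mor G) :
  src b = tgt a -> comp (inv a) (comp a b) = b.
Proof. intro E. rewrite compA by st. rewrite comp_inv_l, <- E. apply comp_idl. Qed.

Lemma inv_cancel_l' (G : Groupoid) (a b : Mor G) :
  src b = src a -> comp a (comp (inv a) b) = b.
Proof. intro E. rewrite compA by st. rewrite comp_inv_r, <- E. apply comp_idl. Qed.

Lemma inv_cancel_r (G : Groupoid) (a b : Mor G) :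
  tgt a = src b -> comp (comp a b) (inv b) = a.
Proof. intro E. rewrite <- compA by st. rewrite comp_inv_r, <- E. apply comp_idr. Qed.

Lemma inv_cancel_r' (G : Groupoid) (a b : Mor G) :
  tgt a = tgt b -> comp (comp a (inv b)) b = a.
Proof. intro E. rewrite <- compA by st. rewrite comp_inv_l, <- E. apply comp_idr. Qed.

Lemma cancel_l (G : Groupoid) (a b c : Mor G) :
  src b = tgt a -> src c = tgt a -> comp a b = comp a c -> b = c.
Proof. intros Eb Ec H. rewrite <- (inv_cancel_l _ a b), H by auto. apply inv_cancel_l; auto. Qed.

Lemma cancel_r (G : Groupoid) (a b c : Mor G) :
  tgt a = src c -> tgt b = src c -> comp a c = comp b c -> a = b.
Proof. intros Eb Ec H. rewrite <- (inv_cancel_r _ a c), H by auto. apply inv_cancel_r; auto. Qed.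


Lemma nat_all (G : Groupoid) (pos : Mor G -> Prop)
  (phio : Obj G -> Obj G) (phim : Mor G -> Mor G) (Delta : Obj G -> Mor G)
  (HG : IsGarsideGroupoid G pos phio phim Delta) :
  forall f, comp f (Delta (tgt f)) = comp (Delta (src f)) (phim f).
Proof.
  destruct HG as (Hid & Hcomp & Henv & Hphif & HphioB & HphimB & Hposphi & HDelta & Hnat & _).
  assert (HDs : forall y, src (Delta y) = y) by (intro y; apply HDelta).
  assert (HDt : forall y, tgt (Delta y) = phio y) by (intro y; apply HDelta).
  set (F := fun f => comp (inv (Delta (src f))) (comp f (Delta (tgt f)))).
  assert (FF : is_functor G G phio F).
  { unfold F; split; [|split; [|split]].
    - intro f. st.
    - intro f. st.
    - intro y. pose proof (comp_idl G (Delta y)) as E; rewrite HDs in E. rewrite src_idm, tgt_idm, E, comp_inv_l, HDt. reflexivity.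
    - intros f g E. rewrite src_comp, tgt_comp by exact E.
      rewrite <- (compA _ (inv (Delta (src f)))) by st.
      f_equal.
      rewrite E. rewrite <- (compA _ f (Delta (src g))) by st.
      rewrite inv_cancel_l' by st. rewrite <- compA by st. reflexivity. }
  assert (Fpos : forall f, pos f -> phim f = F f).
  { intros f Hf. unfold F. rewrite Hnat by exact Hf. rewrite inv_cancel_l; auto.
    destruct Hphif as (Hs & _). st. }
  assert (FFon : is_functor_on G G pos phio F).
  { destruct FF as (A & B & C & D). split; [|split; [|split]]; auto. }
  destruct (Henv G phio F FFon) as [_ Huniq].
  intro f. rewrite (Huniq phim F Hphif FF Fpos (fun _ _ => eq_refl) f). unfold F.
  rewrite inv_cancel_l'; st.
Qed.


Ltac dG HG pos phio Delta := destruct HG as (Hid & Hcomp & Henv & Hphif & HphioB & HphimB & Hposphi & HDelta & Hnat & Hcanl & Hcanr & Hhom & Hatom & HlatL & HlatR);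
  let HDs := fresh "HDs" in let HDt := fresh "HDt" in let HDp := fresh "HDp" in
  assert (HDs : forall y, src (Delta y) = y) by (intro; apply HDelta);
  assert (HDt : forall y, tgt (Delta y) = phio y) by (intro; apply HDelta);
  assert (HDp : forall y, pos (Delta y)) by (intro; apply HDelta);
  let Hps := fresh "Hps" in let Hpt := fresh "Hpt" in let Hpi := fresh "Hpi" in let Hpc := fresh "Hpc" in
  destruct Hphif as (Hps & Hpt & Hpi & Hpc).

Section S.
Lemma bij_inj {A B : Type} (h : A -> B) : bij h -> forall a b, h a = h b -> a = b.
Proof. intros [k [Hk _]] a b E. rewrite <- (Hk a), <- (Hk b), E. reflexivity. Qed.
End S.

Lemma ldiv_refl (G : Groupoid) (pos : Mor G -> Prop) (Hid : forall y, pos (idm y)) f :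
  ldiv G pos f f.
Proof. exists (idm (tgt f)). split; [auto|split]. st. symmetry; apply comp_idr. Qed.

Lemma ldiv_trans (G : Groupoid) (pos : Mor G -> Prop)
  (Hcomp : forall f g, pos f -> pos g -> tgt f = src g -> pos (comp f g)) a b c :
  ldiv G pos a b -> ldiv G pos b c -> ldiv G pos a c.
Proof.
  intros (z & Pz & Ez & E) (z' & Pz' & Ez' & E'). subst.
  exists (comp z z'). split; [apply Hcomp; auto; st|split]. st.
  rewrite <- compA by st. reflexivity.
Qed.

Lemma ldiv_src (G : Groupoid) (pos : Mor G -> Prop) a b :
  ldiv G pos a b -> src b = src a.
Proof. intros (z & Pz & Ez & E). subst. st. Qed.

Lemma ldiv_pos (G : Groupoid) (pos : Mor G -> Prop)
  (Hcomp : forall f g, pos f -> pos g -> tgt f = src g -> pos (comp f g)) a b :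
  pos a -> ldiv G pos a b -> pos b.
Proof. intros Pa (z & Pz & Ez & E). subst. auto. Qed.

Lemma ldiv_hl (G : Groupoid) (pos : Mor G -> Prop) h a b :
  tgt h = src a -> ldiv G pos a b -> ldiv G pos (comp h a) (comp h b).
Proof.
  intros Ea (z & Pz & Ez & E). subst. exists z. split; auto. split. st.
  apply compA; auto.
Qed.

Lemma ldiv_hl_inv (G : Groupoid) (pos : Mor G -> Prop) h a b :
  tgt h = src a -> tgt h = src b -> ldiv G pos (comp h a) (comp h b) -> ldiv G pos a b.
Proof.
  intros Ea Eb (z & Pz & Ez & E). exists z. split; auto. split. st.
  rewrite <- compA in E by st. apply cancel_l in E; auto. st.
Qed.


Lemma Nmono (G : Groupoid) (pos : Mor G -> Prop)
  (phio : Obj G -> Obj G) (phim : Mor G -> Mor G) (Delta : Obj G -> Mor G)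
  (HG : IsGarsideGroupoid G pos phio phim Delta) a b :
  ldiv G pos a b -> ldiv G pos (comp a (Delta (tgt a))) (comp b (Delta (tgt b))).
Proof.
  pose proof (nat_all G pos phio phim Delta HG) as NA.
  dG HG pos phio Delta.
  intros (z & Pz & Ez & E). subst b.
  exists (phim z). split; [apply (proj1 (Hposphi _)); auto|split]. st.
  rewrite !NA. rewrite Hpc by auto. rewrite compA by st. f_equal. st.
Qed.

Lemma phi_reflect (G : Groupoid) (pos : Mor G -> Prop)
  (phio : Obj G -> Obj G) (phim : Mor G -> Mor G) (Delta : Obj G -> Mor G)
  (HG : IsGarsideGroupoid G pos phio phim Delta) kM
  (HkM1 : forall a, kM (phim a) = a) (HkM2 : forall b, phim (kM b) = b) a w t :
  pos t -> tgt w = src t -> phim a = comp w t -> ldiv G pos (kM w) a.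
Proof.
  pose proof (bij_inj phio) as Io.
  dG HG pos phio Delta.
  intros Pt Ew E. exists (kM t). split; [apply (proj2 (Hposphi _)); rewrite HkM2; auto|].
  assert (T : tgt (kM w) = src (kM t)).
  { apply Io; auto. rewrite <- Hpt, <- Hps, !HkM2. auto. }
  split; auto.
  rewrite <- (HkM1 a), <- (HkM1 (comp _ _)). f_equal. rewrite Hpc by auto.
  rewrite !HkM2. auto.
Qed.

Lemma meetN (G : Groupoid) (pos : Mor G -> Prop)
  (phio : Obj G -> Obj G) (phim : Mor G -> Mor G) (Delta : Obj G -> Mor G)
  (HG : IsGarsideGroupoid G pos phio phim Delta) y a b m q :
  pos a -> src a = y -> pos b -> src b = y -> pos m -> src m = y ->
  (forall c, pos c -> src c = y -> ldiv G pos c a -> ldiv G pos c b -> ldiv G pos c m) ->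
  pos q -> src q = y ->
  ldiv G pos q (comp a (Delta (tgt a))) -> ldiv G pos q (comp b (Delta (tgt b))) ->
  ldiv G pos q (comp m (Delta (tgt m))).
Proof.
  pose proof (nat_all G pos phio phim Delta HG) as NA.
  pose proof (bij_inj phio) as Io.
  pose proof HG as HG'.
  dG HG pos phio Delta.
  intros Pa Sa Pb Sb Pm Sm Hglb Pq Sq Qa Qb.
  destruct HphimB as (kM & HkM1 & HkM2).
  destruct (HlatL y) as (_ & _ & _ & Hmj).
  assert (PNa : pos (comp a (Delta (tgt a))) /\ src (comp a (Delta (tgt a))) = y).
  { split; [apply Hcomp; auto; st | st]. }
  assert (PNb : pos (comp b (Delta (tgt b))) /\ src (comp b (Delta (tgt b))) = y).
  { split; [apply Hcomp; auto; st | st]. }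
  destruct (Hmj _ _ PNa PNb) as [(m' & [Pm' Sm'] & M'a & M'b & Hm'glb) _].
  assert (Qm' : ldiv G pos q m') by (apply Hm'glb; auto).
  assert (Da : ldiv G pos (Delta y) (comp a (Delta (tgt a)))).
  { rewrite NA. exists (phim a). split; [apply (proj1 (Hposphi _)); auto|split]. st. rewrite Sa. auto. }
  assert (Db : ldiv G pos (Delta y) (comp b (Delta (tgt b)))).
  { rewrite NA. exists (phim b). split; [apply (proj1 (Hposphi _)); auto|split]. st. rewrite Sb. auto. }
  assert (Dm' : ldiv G pos (Delta y) m') by (apply Hm'glb; auto).
  destruct Dm' as (w & Pw & Ew & Em').
  assert (Za : ldiv G pos (kM w) a).
  { destruct M'a as (t & Pt & Et & E). rewrite NA, Em', Sa in E.
    rewrite <- compA in E by (subst; st).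
    apply cancel_l in E; [| st | subst; st].
    apply (phi_reflect G pos phio phim Delta HG' kM HkM1 HkM2 a w t); auto. subst; st. }
  assert (Zb : ldiv G pos (kM w) b).
  { destruct M'b as (t & Pt & Et & E). rewrite NA, Em', Sb in E.
    rewrite <- compA in E by (subst; st).
    apply cancel_l in E; [| st | subst; st].
    apply (phi_reflect G pos phio phim Delta HG' kM HkM1 HkM2 b w t); auto. subst; st. }
  assert (Pz : pos (kM w)) by (apply (proj2 (Hposphi _)); rewrite HkM2; auto).
  assert (Sz : src (kM w) = y).
  { apply Io; auto. rewrite <- Hps, HkM2. st. }
  destruct (Hglb _ Pz Sz Za Zb) as (s & Ps & Es & Ems).
  apply (ldiv_trans G pos Hcomp _ m'); auto.
  exists (phim s). split; [apply (proj1 (Hposphi _)); auto|split].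
  - rewrite Em'. st.
  - rewrite NA, Sm, Em', Ems. rewrite Hpc by auto. rewrite HkM2.
    rewrite compA by (st; rewrite <- (HkM2 w), Hpt, Es; st). auto.
Qed.


Lemma lowerbound (G : Groupoid) (pos : Mor G -> Prop)
  (phio : Obj G -> Obj G) (phim : Mor G -> Mor G) (Delta : Obj G -> Mor G)
  (HG : IsGarsideGroupoid G pos phio phim Delta) f1 :
  exists h, src h = src f1 /\ ldiv G pos h f1 /\
   forall f, src f = src f1 -> ldiv G pos f1 (comp f (Delta (tgt f))) -> ldiv G pos h f.
Proof.
  pose proof (nat_all G pos phio phim Delta HG) as NA.
  dG HG pos phio Delta.
  destruct HphioB as (kO & HkO1 & HkO2).
  set (z0 := kO (tgt f1)).
  assert (E0 : tgt (Delta z0) = tgt f1) by (rewrite HDt; apply HkO2).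
  exists (comp f1 (inv (Delta z0))).
  assert (Th : tgt (comp f1 (inv (Delta z0))) = z0) by st.
  split; [st|split].
  - exists (Delta z0). split; auto. split. st. symmetry. apply inv_cancel_r'. auto.
  - intros f Sf (p & Pp & Ep & E).
    set (h := comp f1 (inv (Delta z0))) in *.
    assert (Sh : src h = src f1) by (unfold h; st).
    set (r := comp (inv h) f).
    assert (Ef : f = comp h r) by (unfold r; rewrite inv_cancel_l'; congruence).
    assert (Sr : src r = z0) by (unfold r; st).
    assert (Tr : tgt r = tgt f) by (unfold r; st).
    assert (E2 : comp (comp h r) (Delta (tgt r)) = comp f1 p) by (rewrite <- Ef, Tr; exact E). clear E; rename E2 into E.
    rewrite <- compA in E by st. rewrite NA, Sr in E.
    rewrite compA in E by st.
    assert (Hh : comp h (Delta z0) = f1) by (unfold h; apply inv_cancel_r'; auto).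
    rewrite Hh in E. apply cancel_l in E; [|st|st].
    exists r. split; [apply (proj2 (Hposphi _)); rewrite E; auto|split]. st. auto.
Qed.


Lemma caseL (G : Groupoid) (pos : Mor G -> Prop)
  (phio : Obj G -> Obj G) (phim : Mor G -> Mor G) (Delta : Obj G -> Mor G)
  (HG : IsGarsideGroupoid G pos phio phim Delta) h y pi pj m u g :
  tgt h = y -> pos pi -> src pi = y -> pos pj -> src pj = y -> pos m -> src m = y ->
  (forall c, pos c -> src c = y -> ldiv G pos c pi -> ldiv G pos c pj -> ldiv G pos c m) ->
  pos u -> src u = y -> ldiv G pos m u ->
  (forall c, pos c -> src c = y -> ldiv G pos pi c -> ldiv G pos pj c -> ldiv G pos u c) ->
  cell G pos Delta (comp h pi) g -> cell G pos Delta (comp h pj) g ->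
  cell G pos Delta (comp h u) g.
Proof.
  pose proof HG as HG'.
  dG HG pos phio Delta.
  intros Th Ppi Spi Ppj Spj Pm Sm Hglb Pu Su Mu Hlub [A1 B1] [A2 B2].
  destruct A1 as (z & Pz & Ez & Eg).
  rewrite <- compA in Eg by st.
  set (q := comp pi z) in *.
  assert (Pq : pos q) by (apply Hcomp; auto; st).
  assert (Sq : src q = y) by (unfold q; st).
  destruct A2 as (z' & Pz' & Ez' & Eg').
  rewrite <- compA in Eg' by st. rewrite Eg in Eg'.
  apply cancel_l in Eg'; [|st|st].
  assert (Lpi : ldiv G pos pi q) by (exists z; split; [auto|split; [st|reflexivity]]).
  assert (Lpj : ldiv G pos pj q) by (exists z'; split; auto; split; [st|auto]).
  assert (Luq : ldiv G pos u q) by auto.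
  subst g. split.
  - apply ldiv_hl; auto. congruence.
  - assert (Qi : ldiv G pos q (comp pi (Delta (tgt pi)))).
    { rewrite tgt_comp in B1 by st. rewrite <- compA in B1 by st.
      apply ldiv_hl_inv in B1; auto; st. }
    assert (Qj : ldiv G pos q (comp pj (Delta (tgt pj)))).
    { rewrite tgt_comp in B2 by st. rewrite <- compA in B2 by st.
      apply ldiv_hl_inv in B2; auto; st. }
    assert (Qm := meetN G pos phio phim Delta HG' y pi pj m q Ppi Spi Ppj Spj Pm Sm Hglb Pq Sq Qi Qj).
    assert (Qu : ldiv G pos q (comp u (Delta (tgt u)))).
    { apply (ldiv_trans G pos Hcomp _ _ _ Qm). apply (Nmono G pos phio phim Delta HG'); auto. }
    rewrite tgt_comp by st. rewrite <- compA by st.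
    apply ldiv_hl; auto. congruence.
Qed.


Theorem lemma4p8 (G : Groupoid) (pos : Mor G -> Prop)
  (phio : Obj G -> Obj G) (phim : Mor G -> Mor G) (Delta : Obj G -> Mor G)
  (HG : IsGarsideGroupoid G pos phio phim Delta)
  (x : Obj G) (f1 f2 f3 : Mor G)
  (h1 : src f1 = x) (h2 : src f2 = x) (h3 : src f3 = x)
  (i12 : exists g, cell G pos Delta f1 g /\ cell G pos Delta f2 g)
  (i23 : exists g, cell G pos Delta f2 g /\ cell G pos Delta f3 g)
  (i31 : exists g, cell G pos Delta f3 g /\ cell G pos Delta f1 g) :
  exists f : Mor G, src f = x /\
    forall g : Mor G,
      (cell G pos Delta f1 g /\ cell G pos Delta f2 g) \/
      (cell G pos Delta f2 g /\ cell G pos Delta f3 g) \/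
      (cell G pos Delta f3 g /\ cell G pos Delta f1 g) ->
      cell G pos Delta f g.
Proof.
  pose proof HG as HG'.
  dG HG pos phio Delta.
  destruct i12 as (g12 & [A12 _] & [_ D12]).
  destruct i31 as (g31 & [_ D31] & [A31 _]).
  pose proof (ldiv_trans G pos Hcomp _ _ _ A12 D12) as L12.
  pose proof (ldiv_trans G pos Hcomp _ _ _ A31 D31) as L13.
  destruct (lowerbound G pos phio phim Delta HG' f1) as (h & Sh & Lh1 & Lh).
  assert (Lh2 : ldiv G pos h f2) by (apply Lh; congruence).
  assert (Lh3 : ldiv G pos h f3) by (apply Lh; congruence).
  clear Lh L12 L13 A12 D12 A31 D31 i23.
  destruct Lh1 as (p1 & P1 & T1 & ->).
  destruct Lh2 as (p2 & P2 & T2 & ->).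
  destruct Lh3 as (p3 & P3 & T3 & ->).
  set (y := tgt h) in *.
  destruct (HlatL y) as (_ & _ & _ & Hmj).
  assert (Y1 : pos p1 /\ src p1 = y) by auto.
  assert (Y2 : pos p2 /\ src p2 = y) by auto.
  assert (Y3 : pos p3 /\ src p3 = y) by auto.
  destruct (Hmj _ _ Y1 Y2) as [(m12 & Ym12 & M12a & M12b & G12) _].
  destruct (Hmj _ _ Y2 Y3) as [(m23 & Ym23 & M23a & M23b & G23) _].
  destruct (Hmj _ _ Y3 Y1) as [(m31 & Ym31 & M31a & M31b & G31) _].
  destruct (Hmj _ _ Ym12 Ym23) as [_ (j1 & Yj1 & J1a & J1b & U1)].
  destruct (Hmj _ _ Yj1 Ym31) as [_ (u & Yu & Ua & Ub & UU)].
  assert (Tr := ldiv_trans G pos Hcomp).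
  destruct Ym12 as [Pm12 Sm12]. destruct Ym23 as [Pm23 Sm23].
  destruct Ym31 as [Pm31 Sm31]. destruct Yu as [Pu Su].
  assert (Hub : forall c, pos c -> src c = y ->
     ldiv G pos m12 c -> ldiv G pos m23 c -> ldiv G pos m31 c -> ldiv G pos u c).
  { intros c Pc Sc La Lb Lc. apply UU; auto. }
  exists (comp h u). split. { rewrite src_comp in h1 by exact T1. rewrite src_comp by (rewrite Su; reflexivity). exact h1. }
  intros g [[Ca Cb]|[[Ca Cb]|[Ca Cb]]].
  - apply (caseL G pos phio phim Delta HG' h y p1 p2 m12 u g); auto;
    try (apply (Tr _ j1); auto); try (intros c Pc Sc L1 L2; apply Hub; eauto).
  - apply (caseL G pos phio phim Delta HG' h y p2 p3 m23 u g); auto;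
    try (apply (Tr _ j1); auto); try (intros c Pc Sc L1 L2; apply Hub; eauto).
  - apply (caseL G pos phio phim Delta HG' h y p3 p1 m31 u g); auto;
    try (apply (Tr _ j1); auto); try (intros c Pc Sc L1 L2; apply Hub; eauto).
Qed.
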